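(* Let $a\in(0,1)$. There exists a constant $c>0$ such that the following holds. Let $G$ be a connected graph on vertex set $[n]$ with maximum degree $\Delta$, set $\varepsilon=n^{-a}$, let $R\sim G(n,\varepsilon/n)$, and let $G^*=G\cup R$. Then asymptotically almost surely $\iota(G^* )\ge \frac{c}{n^{a}\,\Delta^3\log n}$.
   Context: $G(n,p)$ denotes the binomial random graph on vertex set $[n]$ in which each pair is an edge independently with probability $p$. $G\cup R$ is the graph on $[n]$ whose edge set is the union of the edge sets of $G$ and $R$. For a graph $H$ on $V$ and $S\subseteq V$, $N_H(S)$ is the set of vertices in $V\setminus S$ with a neighbor in $S$, and $\iota(H)=\min\{|N_H(U)|/|U| : 0<|U|\le |V|/2\}$. Asymptotically almost surely means with probability tending to $1$ as $n\to\infty$, for an arbitrary sequence of such graphs $G=G_n$. *)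

(* Defs.v *)
From Stdlib Require Import Reals.
From mathcomp Require Import all_boot.

Set Implicit Arguments.
Unset Strict Implicit.
Unset Printing Implicit Defensive.

Definition is_graph (n : nat) (G : rel 'I_n) : Prop :=
  symmetric G /\ irreflexive G.

Definition connected (n : nat) (G : rel 'I_n) : Prop :=
  forall x y : 'I_n, connect G x y.

Definition nbhd (n : nat) (G : rel 'I_n) (S : {set 'I_n}) : {set 'I_n} :=
  [set v | (v \notin S) && [exists u in S, G v u]].

Definition deg (n : nat) (G : rel 'I_n) (v : 'I_n) : nat :=
  #|[set u | G v u]|.

Definition maxdeg (n : nat) (G : rel 'I_n) : nat :=
  \max_(v : 'I_n) deg G v.

(* iota(H) = min { |N_H(U)|/|U| : 0 < |U| <= n/2 }.  The seed value INR n of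
   the iterated minimum is irrelevant whenever the index set is nonempty,
   since every ratio is at most n-1. *)
Definition vertex_expansion (n : nat) (G : rel 'I_n) : R :=
  \big[Rmin/INR n]_(U : {set 'I_n} | (0 < #|U|) && (#|U|.*2 <= n))
     (Rdiv (INR #|nbhd G U|) (INR #|U|)).

Definition graph_union (n : nat) (G H : rel 'I_n) : rel 'I_n :=
  fun x y => G x y || H x y.

(* The binomial random graph G(n,p): sample space = sets of 2-subsets of [n]. *)
Definition pairs (n : nat) : {set {set 'I_n}} := [set e : {set 'I_n} | #|e| == 2].

Definition edge_rel (n : nat) (E : {set {set 'I_n}}) : rel 'I_n :=
  fun x y => (x != y) && ([set x; y] \in E).

Definition gnp_weight (n : nat) (p : R) (E : {set {set 'I_n}}) : R :=
  Rmult (pow p #|E|) (pow (Rminus R1 p) (#|pairs n| - #|E|)).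

Definition gnp_prob (n : nat) (p : R) (A : {set {set 'I_n}} -> bool) : R :=
  \big[Rplus/R0]_(E : {set {set 'I_n}} | (E \subset pairs n) && A E)
     gnp_weight p E.

Definition Rleb (x y : R) : bool := if Rle_dec x y then true else false.

(* Main.v *)
Require Import Defs.
From HB Require Import structures.
From Stdlib Require Import Reals Lra Lia.
From mathcomp Require Import all_boot zify.
Set Warnings "-notation-overridden,-redundant-canonical-projection".
Local Open Scope R_scope.

HB.instance Definition _ := Monoid.isComLaw.Build R R0 Rplus
  (fun x y z => esym (Rplus_assoc x y z)) Rplus_comm Rplus_0_l.
HB.instance Definition _ := Monoid.isComLaw.Build R R1 Rmult
  (fun x y z => esym (Rmult_assoc x y z)) Rmult_comm Rmult_1_l.
HB.instance Definition _ := Monoid.isMulLaw.Build R R0 Rmult Rmult_0_l Rmult_0_r.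
HB.instance Definition _ := Monoid.isAddLaw.Build R Rmult Rplus Rmult_plus_distr_r Rmult_plus_distr_l.
Lemma binom_sets (T : finType) (S : {set T}) x y :
  \big[Rplus/R0]_(E : {set T} | E \subset S) (x ^ #|E| * y ^ (#|S| - #|E|)) = (x + y) ^ #|S|.
Proof.
have [m Hm] := ubnP #|S|; elim: m S Hm => // m IH S HS.
case: (set_0Vmem S) => [->|[z zS]].
  rewrite cards0 (eq_bigl (fun E : {set T} => E == set0)); last by move=> E; rewrite subset0.
  by rewrite big_pred1_eq cards0 /=; ring.
set S' := S :\ z.
have cS : #|S| = (#|S'|).+1 by rewrite (cardsD1 z S) zS.
have HS' : (#|S'| < m)%N by rewrite -ltnS -cS.
rewrite (bigID (fun E : {set T} => z \in E)) /=.
have H2 : \big[Rplus/R0]_(E : {set T} | (E \subset S) && (z \notin E)) (x ^ #|E| * y ^ (#|S| - #|E|))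
   = y * (x + y) ^ #|S'|.
  rewrite -(IH S' HS') big_distrr.
  apply: eq_big.
  - move=> E; apply/andP/idP.
    + by case=> ES zE; rewrite subsetD1 ES zE.
    + by rewrite subsetD1 => /andP[-> ->].
  - move=> E /andP[ES zE].
    have cE : (#|E| <= #|S'|)%N.
      by apply: subset_leq_card; rewrite subsetD1 ES zE.
    rewrite cS subSn //=; ring.
have H1 : \big[Rplus/R0]_(E : {set T} | (E \subset S) && (z \in E)) (x ^ #|E| * y ^ (#|S| - #|E|))
   = x * (x + y) ^ #|S'|.
  rewrite -(IH S' HS') big_distrr.
  rewrite (reindex_onto (fun E : {set T} => z |: E) (fun E => E :\ z)); last first.
    by move=> E /andP[_ zE]; rewrite setD1K.
  apply: eq_big.
  - move=> E; rewrite setU11 andbT subUset sub1set zS /=.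
    apply/andP/idP.
    + case=> ES /eqP EE; rewrite subsetD1 ES /= -EE setD11 //.
    + rewrite subsetD1 => /andP[ES zE]; split; last by rewrite setU1K.
      by [].
  - move=> E /andP[/andP[ES _] /eqP EE].
    have zE : z \notin E by rewrite -EE setD11.
    move: ES; rewrite subUset => /andP[_ ES].
    have cE : (#|E| <= #|S'|)%N by apply: subset_leq_card; rewrite subsetD1 ES zE.
    rewrite cardsU1 zE cS /= add1n subSS add0n; exact: Rmult_assoc.
rewrite H1 H2 cS /=; ring.
Qed.

Section Sums.
Variable I : finType.
Lemma sum_le (P : pred I) (F G : I -> R) :
  (forall i, P i -> F i <= G i) ->
  \big[Rplus/R0]_(i | P i) F i <= \big[Rplus/R0]_(i | P i) G i.
Proof.
move=> H; apply: (big_ind2 (fun a b => a <= b)) => //; first lra.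
by move=> *; apply: Rplus_le_compat.
Qed.
Lemma sum_ge0 (P : pred I) (F : I -> R) :
  (forall i, P i -> 0 <= F i) -> 0 <= \big[Rplus/R0]_(i | P i) F i.
Proof.
move=> H; apply: (big_ind (fun a => 0 <= a)) => //; first lra.
by move=> *; lra.
Qed.
Lemma sum_le_sub (P Q : pred I) (F : I -> R) :
  (forall i, P i -> Q i) -> (forall i, Q i -> 0 <= F i) ->
  \big[Rplus/R0]_(i | P i) F i <= \big[Rplus/R0]_(i | Q i) F i.
Proof.
move=> PQ H; rewrite (big_mkcond P) (big_mkcond Q).
apply: sum_le => i _; case: ifP => Pi; first by rewrite PQ //; lra.
by case: ifP => Qi; [apply: H | lra].
Qed.
Lemma sum_ge_term (P : pred I) (F : I -> R) j :
  P j -> (forall i, P i -> 0 <= F i) -> F j <= \big[Rplus/R0]_(i | P i) F i.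
Proof.
move=> Pj H; rewrite (bigD1 j) //=.
have : 0 <= \big[Rplus/R0]_(i | P i && (i != j)) F i.
  by apply: sum_ge0 => i /andP[Pi _]; apply: H.
lra.
Qed.
End Sums.

Lemma weight_ge0 n p E : 0 <= p <= 1 -> 0 <= gnp_weight (n:=n) p E.
Proof.
move=> Hp; rewrite /gnp_weight; apply: Rmult_le_pos; apply: pow_le; rewrite /Rminus; lra.
Qed.

Lemma gnp_total n p :
  \big[Rplus/R0]_(E : {set {set 'I_n}} | E \subset pairs n) gnp_weight p E = 1.
Proof.
rewrite /gnp_weight binom_sets.
have -> : p + (R1 - p) = 1 by rewrite /Rminus; lra.
by rewrite pow1.
Qed.

Lemma gnp_compl n p (A : {set {set 'I_n}} -> bool) :
  gnp_prob p A = 1 - gnp_prob p (fun E => ~~ A E).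
Proof.
rewrite /gnp_prob -(gnp_total n p) [X in _ = X - _](bigID A) /=; lra.
Qed.

Lemma gnp_ge0 n p (A : {set {set 'I_n}} -> bool) : 0 <= p <= 1 -> 0 <= gnp_prob p A.
Proof. by move=> Hp; apply: sum_ge0 => E _; apply: weight_ge0. Qed.

Lemma gnp_disj n p (F : {set {set 'I_n}}) :
  F \subset pairs n ->
  gnp_prob p (fun E => E :&: F == set0) = (1 - p) ^ #|F|.
Proof.
move=> Fp; rewrite /gnp_prob.
set S := pairs n :\: F.
have cP : #|pairs n| = (#|F| + #|S|)%N.
  by rewrite -(cardsID F (pairs n)) (setIidPr Fp).
have HS := @binom_sets _ S p (R1 - p).
have e1 : p + (R1 - p) = 1 by rewrite /Rminus; lra.
rewrite e1 pow1 in HS.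
transitivity ((1 - p) ^ #|F| * \big[Rplus/R0]_(E : {set {set 'I_n}} | E \subset S)
  (p ^ #|E| * (R1 - p) ^ (#|S| - #|E|))); last by rewrite HS Rmult_1_r.
rewrite big_distrr.
apply: eq_big.
- by move=> E; rewrite subsetD -setI_eq0 setIC.
- move=> E /andP[EP EF].
  have cE : (#|E| <= #|S|)%N.
    apply: subset_leq_card; rewrite subsetD EP /=.
    by rewrite -setI_eq0.
  rewrite /gnp_weight cP -addnBA // pow_add /=.
  change (p ^ #|E| * ((R1 - p) ^ #|F| * (R1 - p) ^ (#|S| - #|E|)) =
     Rmult ((1 - p) ^ #|F|) (p ^ #|E| * (R1 - p) ^ (#|S| - #|E|))).
  have -> : R1 = 1 by []. ring.
Qed.

Lemma union_bound n p (J : finType) (Pj : pred J) (B : J -> {set {set 'I_n}} -> bool)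
  (A : {set {set 'I_n}} -> bool) :
  0 <= p <= 1 ->
  (forall E : {set {set 'I_n}}, E \subset pairs n -> A E -> exists j, Pj j && B j E) ->
  gnp_prob p A <= \big[Rplus/R0]_(j | Pj j) gnp_prob p (B j).
Proof.
move=> Hp HA; rewrite /gnp_prob.
apply: (Rle_trans _ (\big[Rplus/R0]_(E : {set {set 'I_n}} | (E \subset pairs n) && A E)
   \big[Rplus/R0]_(j | Pj j && B j E) gnp_weight p E)).
  apply: sum_le => E /andP[EP AE].
  have [j Hj] := HA E EP AE.
  by apply: (@sum_ge_term _ _ (fun _ => gnp_weight p E) j) Hj _ => i _; apply: weight_ge0.
apply: (Rle_trans _ (\big[Rplus/R0]_(E : {set {set 'I_n}} | (E \subset pairs n))
   \big[Rplus/R0]_(j | Pj j && B j E) gnp_weight p E)).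
  apply: sum_le_sub => [E /andP[]//|E _].
  by apply: sum_ge0 => j _; apply: weight_ge0.
rewrite (exchange_big_dep Pj) /=; last by move=> E j _ /andP[].
apply: Req_le; apply: eq_bigr => j Pjj; apply: eq_bigl => E.
by rewrite Pjj.
Qed.

Set Implicit Arguments.
Unset Strict Implicit.
Definition restr (T : finType) (e : rel T) (A : {set T}) : rel T :=
  fun a b => e a b && (a \in A) && (b \in A).

Lemma connect_closedS (T : finType) (e : rel T) (A : {set T}) x y :
  (forall a b, e a b -> a \in A -> b \in A) -> connect e x y -> x \in A -> y \in A.
Proof.
move=> H /connectP[p pth ->]; elim: p x pth => //= z p IH x /andP[exz pth] xA.
exact: IH pth (H _ _ exz xA).
Qed.

Lemma exit_path (T : finType) (e : rel T) (A : {set T}) x p :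
  path e x p -> x \in A -> last x p \notin A ->
  exists x' y', [/\ connect (restr e A) x x', x' \in A, y' \notin A & e x' y'].
Proof.
elim: p x => [|z p IH] x /=; first by move=> _ ->.
case/andP=> exz pth xA lA.
case zA: (z \in A); last first.
  exists x, z; split => //; try exact: connect0; by rewrite zA.
have [x' [y' [c1 x'A y'A e']]] := IH z pth zA lA.
exists x', y'; split => //.
apply: connect_trans c1; apply: connect1; by rewrite /restr exz xA zA.
Qed.

Section Graph.
Variable n : nat.
Variable G : rel 'I_n.
Hypothesis Gs : symmetric G.
Hypothesis Gc : forall x y, connect G x y.

Definition comp (W C : {set 'I_n}) : {set 'I_n} :=
  [set v | (v \notin W) && [exists c in C, connect (restr G (~: W)) c v]].

Lemma nbhd_nonempty (U : {set 'I_n}) u v : u \in U -> v \notin U -> exists y, y \in nbhd G U.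
Proof.
move=> uU vU; have /connectP[p pth lp] := Gc u v.
have lpU : last u p \notin U by rewrite -lp.
have [x' [y' [_ x'U y'U e']]] := exit_path pth uU lpU.
exists y'; rewrite /nbhd inE y'U /=; apply/existsP; exists x'; by rewrite x'U Gs.
Qed.

Lemma comp_eq (U W : {set 'I_n}) w0 :
  [disjoint U & W] -> nbhd G U \subset W -> w0 \in W ->
  comp W (U :&: nbhd G W) = U.
Proof.
move=> dUW sNW w0W.
have clos : forall a b, restr G (~: W) a b -> a \in U -> b \in U.
  move=> a b /andP[/andP[eab _]]; rewrite in_setC => bW aU.
  apply/negP => bU; move/negP: bW; apply; apply: (subsetP sNW).
  rewrite /nbhd inE; apply/andP; split; first by apply/negP.
  by apply/existsP; exists a; rewrite aU Gs.
apply/setP => v; rewrite /comp inE; apply/idP/idP.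
- case/andP=> vW /existsP[c /andP[]]; rewrite inE => /andP[cU _] cv.
  exact: connect_closedS clos cv cU.
- move=> vU.
  have vW : v \notin W.
    by move: dUW; rewrite disjoint_subset => /subsetP/(_ v vU).
  rewrite vW /=.
  have /connectP[p pth lp] := Gc v w0.
  have vC : v \in ~: W by rewrite in_setC.
  have lpW : last v p \notin ~: W by rewrite -lp in_setC negbK.
  have [x' [y' [c1 x'A y'A e']]] := exit_path pth vC lpW.
  apply/existsP; exists x'; rewrite inE.
  have x'U : x' \in U by exact: connect_closedS clos c1 vU.
  rewrite x'U /=; apply/andP; split.
    rewrite /nbhd inE; rewrite in_setC in x'A; rewrite x'A /=.
    by apply/existsP; exists y'; rewrite e' andbT; rewrite in_setC negbK in y'A.
  have sym : connect_sym (restr G (~: W)).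
    apply: sym_connect_sym => a b; rewrite /restr Gs; by case: (a \in _); case: (b \in _); rewrite ?andbT ?andbF.
  by rewrite sym.
Qed.

Lemma card_bigcup_le (I : finType) (P : pred I) (F : I -> {set 'I_n}) :
  (#|\bigcup_(i | P i) F i| <= \sum_(i | P i) #|F i|)%N.
Proof.
apply: (big_ind2 (fun (S : {set 'I_n}) (k : nat) => #|S| <= k)%N) => //.
  by rewrite cards0.
move=> A a B b Ha Hb; rewrite cardsU.
exact: leq_trans (leq_subr _ _) (leq_add Ha Hb).
Qed.

Lemma nbhd_card (W : {set 'I_n}) : (#|nbhd G W| <= maxdeg G * #|W|)%N.
Proof.
have sub : nbhd G W \subset \bigcup_(u in W) [set v | G u v].
  apply/subsetP => v; rewrite /nbhd inE => /andP[_ /existsP[u /andP[uW Gvu]]].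
  by apply/bigcupP; exists u => //; rewrite inE Gs.
apply: leq_trans (subset_leq_card sub) _.
apply: leq_trans (card_bigcup_le _ _) _.
rewrite mulnC -sum_nat_const; apply: leq_sum => u _.
by rewrite /maxdeg; exact: (@leq_bigmax _ (fun v => deg G v) u).
Qed.

End Graph.

Definition Fset n (U T : {set 'I_n}) : {set {set 'I_n}} :=
  [set [set u; t] | u in U, t in T].

Lemma disj_neq n (U T : {set 'I_n}) u t : [disjoint U & T] -> u \in U -> t \in T -> u != t.
Proof.
move=> d uU tT; apply/eqP => ut; subst t.
by move: d; rewrite disjoint_subset => /subsetP/(_ u uU); rewrite inE tT.
Qed.

Lemma Fset_sub n (U T : {set 'I_n}) : [disjoint U & T] -> Fset U T \subset pairs n.
Proof.
move=> d; apply/subsetP => f /imset2P[u t uU tT ->].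
by rewrite /pairs inE cards2 (disj_neq d uU tT).
Qed.

Lemma Fset_card n (U T : {set 'I_n}) : [disjoint U & T] -> #|Fset U T| = (#|U| * #|T|)%N.
Proof.
move=> d; rewrite /Fset curry_imset2X card_in_imset ?cardsX //.
move=> [u t] [u' t']; rewrite !in_setX /= => /andP[uU tT] /andP[u'U t'T] /= H.
have : u \in [set u'; t'] by rewrite -H set21.
case/set2P => [eu|eu]; last first.
  by subst u; move: (disj_neq d uU t'T); rewrite eqxx.
subst u'.
have : t \in [set u; t'] by rewrite -H set22.
case/set2P => [et|et]; last by subst.
by subst t; move: (disj_neq d uU tT); rewrite eqxx.
Qed.

Lemma maxdeg_pos n (G : rel 'I_n) : symmetric G -> (forall x y, connect G x y) -> (2 <= n)%N ->
  (1 <= maxdeg G)%N.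
Proof.
move=> Gs Gc n2.
have h0 : (0 < n)%N by apply: leq_trans n2.
pose x := Ordinal h0; pose y := Ordinal n2.
have xy : x != y by [].
have yx : y \notin [set x] by rewrite inE eq_sym.
have [z] := @nbhd_nonempty n G Gs Gc [set x] x y (set11 x) yx.
rewrite /nbhd inE => /andP[_ /existsP[u /andP[]]]; rewrite inE => /eqP -> Gzx.
apply: leq_trans (_ : deg G x <= _)%N.
  by apply/card_gt0P; exists z; rewrite inE Gs.
by rewrite /maxdeg; exact: (@leq_bigmax _ (fun v => deg G v) x).
Qed.

Definition Rltb (x y : R) : bool := if Rlt_dec x y then true else false.
Lemma RlebP x y : Rleb x y = true <-> x <= y.
Proof. by rewrite /Rleb; case: Rle_dec. Qed.
Lemma RltbP x y : Rltb x y = true <-> x < y.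
Proof. by rewrite /Rltb; case: Rlt_dec. Qed.

Lemma bigmin_ge (I : finType) (P : pred I) (F : I -> R) x0 t :
  t <= x0 -> (forall i, P i -> t <= F i) -> t <= \big[Rmin/x0]_(i | P i) F i.
Proof.
move=> h0 H; apply: (big_ind (fun a => t <= a)) => // a b ha hb.
by apply: Rmin_glb.
Qed.

Lemma exp_le' x y : x <= y -> exp x <= exp y.
Proof. by case/Rle_lt_or_eq_dec => [h|->]; [apply: Rlt_le; apply: exp_increasing | lra]. Qed.

Lemma pow_exp y k : exp y ^ k = exp (INR k * y).
Proof. rewrite -Rpower_pow; [by rewrite /Rpower ln_exp | apply: exp_pos]. Qed.

Lemma INR_ge2 n : (2 <= n)%N -> 2 <= INR n.
Proof. by move=> /leP h; have := le_INR 2 n h; rewrite /=; lra. Qed.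

Lemma tail_bound n : (2 <= n)%N ->
  (1 + exp (-3 * ln (INR n))) ^ n - 1 <= 2 / INR n.
Proof.
move=> n2; have N2 := INR_ge2 n2; set N := INR n in N2 *.
have eN : exp (ln N) = N by apply: exp_ln; lra.
have ex : exp (-3 * ln N) = / (N * N * N).
  have -> : -3 * ln N = - (INR 3 * ln N) by rewrite /=; ring.
  by rewrite exp_Ropp -pow_exp eN /=; rewrite Rmult_1_r Rmult_assoc.
set x := exp (-3 * ln N).
have xpos : 0 < x by apply: exp_pos.
have h1 : (1 + x) ^ n <= exp (N * x).
  rewrite /N -pow_exp; apply: pow_incr; have := exp_ineq1_le x; lra.
set t := N * x.
have tv : t = / (N * N) by rewrite /t /x ex; field; lra.
have t0 : 0 < t by rewrite tv; apply: Rinv_0_lt_compat; nra.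
have t1 : t <= / (2 * N).
  rewrite tv; apply: Rinv_le_contravar; nra.
have et : exp t * (1 - t) <= 1.
  have := exp_ineq1_le (- t); rewrite exp_Ropp => h.
  have ept := exp_pos t.
  have : (1 - t) * exp t <= / exp t * exp t by apply: Rmult_le_compat_r; lra.
  by rewrite Rinv_l; [lra | apply: Rgt_not_eq].
have t12 : t <= / 4.
  apply: Rle_trans t1 _; apply: Rinv_le_contravar; lra.
have : exp t - 1 <= 2 * t by nra.
have : 2 * t <= 2 / N.
  have iN : 0 < / N by apply: Rinv_0_lt_compat; lra.
  rewrite Rinv_mult in t1; rewrite /Rdiv; lra.
move=> ? ?; have : exp (N * x) = exp t by []. lra.
Qed.

Lemma main_bound n (G : rel 'I_n) (Gs : symmetric G) (Gc : forall x y, connect G x y)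
  (n2 : (2 <= n)%N) (q r : R) :
  0 < q -> q <= 1 -> 1 <= r -> r * q = 1 ->
  gnp_prob (q / INR n) (fun E => ~~ Rleb (1 / 16 / (r * INR (maxdeg G) ^ 3 * ln (INR n)))
       (vertex_expansion (graph_union G (edge_rel E))))
  <= (1 + exp (-3 * ln (INR n))) ^ n - 1.
Proof.
move=> q0 q1 r1 rq.
have N2 := INR_ge2 n2. set N := INR n in N2 *.
set D := INR (maxdeg G).
have D1 : 1 <= D.
  have := maxdeg_pos Gs Gc n2 => /leP h; have := le_INR _ _ h; rewrite /D /=; lra.
set L := ln N.
have L2 : ln 2 <= L.
  case: (Rle_lt_or_eq_dec 2 N N2) => [h|e]; last by rewrite /L -e; lra.
  by apply: Rlt_le; apply: ln_increasing; lra.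
have L12 : / 2 < L by have := ln_lt_2; lra.
have D3 : D <= D ^ 3 by rewrite /=; nra.
set K := r * D ^ 3 * L.
have rD : 1 <= r * D ^ 3 by nra.
have K12 : / 2 <= K by rewrite /K; nra.
set th := 1 / 16 / K.
have th0 : 0 < th by rewrite /th; apply: Rdiv_lt_0_compat; lra.
have th12 : th <= / 2.
  rewrite /th /Rdiv; apply: (Rmult_le_reg_r K); first lra.
  rewrite Rmult_assoc Rinv_l; lra.
set p := q / N.
have p01 : 0 <= p <= 1.
  split; rewrite /p /Rdiv; first by apply: Rmult_le_pos; [lra | apply: Rlt_le; apply: Rinv_0_lt_compat; lra].
  apply: (Rmult_le_reg_r N); first lra.
  rewrite Rmult_assoc Rinv_l; lra.
pose U (i : {set 'I_n} * {set 'I_n}) := comp G i.1 i.2.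
pose T (i : {set 'I_n} * {set 'I_n}) := ~: (U i :|: i.1).
pose cond (i : {set 'I_n} * {set 'I_n}) :=
  ((#|U i|).*2 <= n)%N && Rltb (INR #|i.1|) (th * INR #|U i|).
pose Pj (i : {set 'I_n} * {set 'I_n}) := (0 < #|i.1|)%N && (i.2 \subset nbhd G i.1).
pose B (i : {set 'I_n} * {set 'I_n}) (E : {set {set 'I_n}}) :=
  cond i && (E :&: Fset (U i) (T i) == set0).
have cover : forall E : {set {set 'I_n}}, E \subset pairs n ->
    ~~ Rleb th (vertex_expansion (graph_union G (edge_rel E))) -> exists j, Pj j && B j E.
  move=> E EP bad.
  set Gs' := graph_union G (edge_rel E).
  case: (pickP (fun U0 : {set 'I_n} => ((0 < #|U0|)%N && (#|U0|.*2 <= n)%N)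
       && Rltb (INR #|nbhd Gs' U0| / INR #|U0|) th)) =>
     [U0 /andP[/andP[U0pos U0half] /RltbP Hlt] | Hnone]; last first.
    exfalso; move/negP: bad; apply; apply/RlebP; apply: bigmin_ge; first by rewrite -/N; lra.
    move=> U0 HU0; have := Hnone U0; rewrite HU0 /= => hf.
    apply: Rnot_lt_le => h'; move: hf; by rewrite (proj2 (RltbP _ _) h').
  set W := nbhd Gs' U0.
  have sub : nbhd G U0 \subset W.
    apply/subsetP => v; rewrite /W /nbhd !inE => /andP[vU /existsP[u /andP[uU Gvu]]].
    rewrite vU /=; apply/existsP; exists u; by rewrite uU /Gs' /graph_union Gvu.
  have [u uU] : exists u, u \in U0 by apply/card_gt0P.
  have [v vU] : exists v, v \notin U0.
    case: (pickP (fun v => v \notin U0)) => [v h|h]; first by exists v.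
    exfalso; have : (n <= #|U0|)%N.
      apply: (@leq_trans #|[set: 'I_n]|); first by rewrite cardsT card_ord.
      apply: subset_leq_card; apply/subsetP => x _; by move: (h x) => /negbFE.
    lia.
  have [y yN] := nbhd_nonempty Gs Gc uU vU.
  have yW : y \in W by apply: (subsetP sub).
  have Wpos : (0 < #|W|)%N by apply/card_gt0P; exists y.
  have dUW : [disjoint U0 & W].
    rewrite disjoint_subset; apply/subsetP => x xU; by rewrite inE /W /nbhd inE xU.
  have ceq : comp G W (U0 :&: nbhd G W) = U0 := comp_eq Gs Gc dUW sub yW.
  exists (W, U0 :&: nbhd G W).
  rewrite /Pj /B /cond /T /U /= ceq Wpos subsetIr U0half /=.
  apply/andP; split.
    apply/RltbP.
    have upos : 0 < INR #|U0| by apply: lt_0_INR; apply/ltP.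
    have := Rmult_lt_compat_r (INR #|U0|) _ _ upos Hlt.
    rewrite /Rdiv Rmult_assoc Rinv_l -/W ?Rmult_1_r; [by [] | lra].
  apply/eqP/setP => f; rewrite inE in_set0; apply/negP => /andP[fE /imset2P[a b aU bT ef]].
  move: bT; rewrite in_setC in_setU negb_or => /andP[bU bW].
  move/negP: bW; apply.
  rewrite /W /nbhd inE bU /=; apply/existsP; exists a; rewrite aU /= /Gs' /graph_union /edge_rel.
  have ba : b != a by apply/eqP => eba; move: bU; rewrite eba aU.
  by rewrite ba /= setUC -ef fE orbT.

apply: Rle_trans (@union_bound n p _ Pj B _ p01 cover) _.
pose h (W : {set 'I_n}) := exp (-4 * INR #|W| * D ^ 3 * L).
have hpos : forall W, 0 <= h W by move=> W; apply: Rlt_le; apply: exp_pos.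
apply: (Rle_trans _ (\big[Rplus/R0]_(j | Pj j) h j.1)).
  apply: sum_le => -[W C] /andP[/= Wpos CW].
  case Hc: (cond (W, C)); last first.
    rewrite /gnp_prob big_pred0; first exact: hpos.
    by move=> E; rewrite /B Hc andbF.
  have dUT : [disjoint U (W, C) & T (W, C)].
    rewrite disjoint_subset; apply/subsetP => x xU; by rewrite inE /T in_setC negbK in_setU xU.
  have -> : gnp_prob p (B (W, C)) = gnp_prob p (fun E => E :&: Fset (U (W, C)) (T (W, C)) == set0).
    by rewrite /gnp_prob; apply: eq_bigl => E; rewrite /B Hc.
  rewrite gnp_disj ?Fset_sub // Fset_card //.
  move: Hc; rewrite /cond => /andP[Uhalf /RltbP wlt].
  set u := #|U (W, C)| in Uhalf wlt *.
  set t := #|T (W, C)|.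
  change (INR #|W| < th * INR u) in wlt.
  have ntot : (n <= t + (u + #|W|))%N.
    have e1 := cardsC (U (W, C) :|: W); rewrite card_ord in e1.
    have e2 : (#|U (W, C) :|: W| <= u + #|W|)%N by rewrite cardsU leq_subr.
    by rewrite /t /T /= -{1}e1 addnC leq_add2l.
  have nR : N <= INR t + INR u + INR #|W|.
    by move/leP: ntot => h'; have := le_INR _ _ h'; rewrite !plus_INR -/N; lra.
  have uR : 2 * INR u <= N.
    by move: Uhalf; rewrite -addnn => /leP h'; have := le_INR _ _ h'; rewrite plus_INR -/N; lra.
  have u0 : 0 <= INR u by apply: pos_INR.
  have w0 : 0 <= INR #|W| by apply: pos_INR.
  have tN : N / 4 <= INR t.
    have : INR #|W| <= INR u / 2 by apply: Rle_trans (Rlt_le _ _ wlt) _; nra.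
    lra.
  have a : INR #|W| * K * 16 < INR u.
    have := Rmult_lt_compat_r (K * 16) _ _ (ltac:(lra) : 0 < K * 16) wlt.
    move=> hh; have e : th * INR u * (K * 16) = INR u by rewrite /th; field; lra.
    nra.
  have b : 16 * INR #|W| * D ^ 3 * L < INR u * q.
    have := Rmult_lt_compat_r q _ _ q0 a; rewrite /K.
    have -> : INR #|W| * (r * D ^ 3 * L) * 16 * q = INR #|W| * (r * q) * D ^ 3 * L * 16 by ring.
    rewrite rq; lra.
  have c : INR u * q / 4 <= INR u * INR t * p.
    rewrite /p.
    have -> : INR u * INR t * (q / N) = (INR u * q / N) * INR t by field; lra.
    have -> : INR u * q / 4 = (INR u * q / N) * (N / 4) by field; lra.
    apply: Rmult_le_compat_l => //.
    apply: Rmult_le_pos; first nra.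
    by apply: Rlt_le; apply: Rinv_0_lt_compat; lra.
  apply: (Rle_trans _ (exp (- p) ^ (u * t))).
    apply: pow_incr; have := exp_ineq1_le (- p); rewrite /Rminus; lra.
  rewrite pow_exp mult_INR /h; apply: exp_le'; nra.
set x := exp (-3 * L).
have x0 : 0 < x by apply: exp_pos.
rewrite (_ : \big[Rplus/R0]_(j | Pj j) h j.1 =
   \big[Rplus/R0]_(W : {set 'I_n} | (0 < #|W|)%N) \big[Rplus/R0]_(C : {set 'I_n} | C \subset nbhd G W) h W); last first.
  by rewrite pair_big_dep.
apply: (Rle_trans _ (\big[Rplus/R0]_(W : {set 'I_n} | (0 < #|W|)%N) x ^ #|W|)).
  apply: sum_le => W Wpos.
  rewrite (eq_bigr (fun C : {set 'I_n} => h W * (1 ^ #|C| * 1 ^ (#|nbhd G W| - #|C|)))); last first.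
    by move=> C _; rewrite !pow1 !Rmult_1_r.
  rewrite -big_distrr binom_sets.
  have e2 : (1 + 1) ^ #|nbhd G W| <= exp (INR (maxdeg G * #|W|) * L).
    apply: (Rle_trans _ (2 ^ (maxdeg G * #|W|))).
      have -> : 1 + 1 = 2 by lra.
      by apply: Rle_pow; [lra | apply/leP; apply: nbhd_card].
    have e2' : 2 = exp (ln 2) by rewrite exp_ln; lra.
    rewrite e2' pow_exp; apply: exp_le'; apply: Rmult_le_compat_l => //; apply: pos_INR.
  apply: (Rle_trans _ (h W * exp (INR (maxdeg G * #|W|) * L))).
    by apply: Rmult_le_compat_l.
  rewrite /h /x pow_exp -exp_plus; apply: exp_le'.
  rewrite mult_INR -/D.
  have w0 : 0 <= INR #|W| by apply: pos_INR.
  have DD : D * INR #|W| * L <= D ^ 3 * INR #|W| * L.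
    apply: Rmult_le_compat_r; first lra.
    by apply: Rmult_le_compat_r.
  have : INR #|W| * L <= D ^ 3 * INR #|W| * L.
    have : INR #|W| * L <= D * INR #|W| * L by nra.
    lra.
  lra.
have Hall := @binom_sets _ [set: 'I_n] x 1.
rewrite cardsT card_ord in Hall.
rewrite (bigD1 set0) ?sub0set //= cards0 in Hall.
suff -> : \big[Rplus/R0]_(W : {set 'I_n} | (0 < #|W|)%N) x ^ #|W| =
   \big[Rplus/R0]_(W : {set 'I_n} | (W \subset [set: 'I_n]) && (W != set0)) (x ^ #|W| * 1 ^ (n - #|W|)).
  rewrite -/x in Hall. move: Hall; rewrite /= pow1 (Rplus_comm 1 x) => HH.
  have HH2 : forall a b c : R, 1 * 1 + a = c -> b = a -> b <= c - 1 by move=> *; lra.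
  by apply: HH2 HH _.
apply: eq_big.
  by move=> W; rewrite subsetT card_gt0.
by move=> W _; rewrite pow1 Rmult_1_r.
Qed.


Theorem mainTheorem2 :
  forall a : R, 0 < a < 1 ->
  exists c : R, 0 < c /\
  forall G : forall n : nat, rel 'I_n,
    (forall n : nat, is_graph (G n) /\ connected (G n)) ->
    Un_cv
      (fun n : nat =>
         gnp_prob (Rpower (INR n) (- a) / INR n)
           (fun E : {set {set 'I_n}} =>
              Rleb (c / (Rpower (INR n) a * INR (maxdeg (G n)) ^ 3 * ln (INR n)))
                   (vertex_expansion (graph_union (G n) (edge_rel E)))))
      1.
Proof.
move=> a Ha; exists (1 / 16); split; first lra.
move=> G HG eps eps0.
have [N0 [HN0 N0pos]] := archimed_cor1 (eps / 2) (ltac:(lra)).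
exists (N0 + 2)%nat => n Hn.
have n2 : (2 <= n)%N by apply/leP; lia.
have N2 := INR_ge2 n2.
have [[Gs _] Gc] := HG n.
have lnn : 0 <= ln (INR n).
  rewrite -ln_1; case: (Rle_lt_or_eq_dec 1 (INR n) (ltac:(lra))) => [h|<-]; last lra.
  by apply: Rlt_le; apply: ln_increasing; lra.
have q0 : 0 < Rpower (INR n) (- a) by apply: exp_pos.
have q1 : Rpower (INR n) (- a) <= 1.
  rewrite /Rpower -exp_0; apply: exp_le'; nra.
have r1 : 1 <= Rpower (INR n) a.
  rewrite /Rpower -exp_0; apply: exp_le'; nra.
have rq : Rpower (INR n) a * Rpower (INR n) (- a) = 1.
  by rewrite /Rpower -exp_plus -exp_0; congr exp; ring.
have hb := main_bound Gs Gc n2 q0 q1 r1 rq.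
have ht := tail_bound n2.
rewrite gnp_compl.
set bad := gnp_prob _ _ in hb *.
have b0 : 0 <= bad.
  apply: gnp_ge0; split; first by apply: Rlt_le; apply: Rdiv_lt_0_compat; lra.
  apply: (Rmult_le_reg_r (INR n)); first lra.
  rewrite /Rdiv Rmult_assoc Rinv_l; lra.
have nN : INR N0 <= INR n by apply: le_INR; lia.
have N0p : 0 < INR N0 by apply: lt_0_INR; lia.
have e2 : 2 / INR n <= 2 / INR N0.
  apply: Rmult_le_compat_l; first lra.
  by apply: Rinv_le_contravar.
rewrite /R_dist; have -> : 1 - bad - 1 = - bad by ring.
rewrite Rabs_Ropp Rabs_pos_eq //.
have : 2 / INR N0 = 2 * / INR N0 by [].
lra.
Qed.
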